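(* Let $G$ be a Hausdorff topological group. (a) If $G$ is STAP then $G$ is HTAP, and if $G$ is HTAP then $G$ is TAP. (a-bis) If $G$ is abelian, then $G$ is HTAP if and only if $G$ is TAP. (b) Let $(D_i)_{i\in\mathbb N}$ be nontrivial discrete groups and $H=\{g\in\prod_i D_i:\{i:g(i)\ne e_{D_i}\}\text{ finite}\}$ with the topology induced from the product topology. Then $H$ is HTAP but not STAP. In particular, taking the $D_i$ finite abelian, there is a countable metrizable precompact abelian group which is TAP but not STAP.
   Context: $\prod_{k=1}^n a_k=a_1\cdots a_n$; $e$ is the neutral element. A sequence $(g_n)$ in $G$ is hyper-multipliable if for every integer sequence $(m_n)$ the sequence $\left(\prod_{k=1}^n g_k^{m_k}\right)_n$ converges in $G$; hyper-converging if $g_n^{m_n}\to e$ for every integer sequence $(m_n)$. A subset $A\subset G$ is absolutely productive if every sequence of pairwise distinct elements of $A$ is hyper-multipliable. $G$ is TAP if every absolutely productive subset of $G$ is finite; HTAP if no sequence of pairwise distinct elements of $G$ is hyper-multipliable; STAP if no sequence of pairwise distinct elements of $G$ is hyper-converging. *)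

(* Defs.v *)
From Stdlib Require Import Reals ZArith List Classical.

Set Implicit Arguments.

Record GTData := {
  gcar :> Type;
  gmul : gcar -> gcar -> gcar;
  ginv : gcar -> gcar;
  gone : gcar;
  gopen : (gcar -> Prop) -> Prop
}.

Section Props.
Variable G : GTData.
Local Notation "x * y" := (gmul G x y).

Definition group_axioms : Prop :=
  (forall x y z : G, x * (y * z) = (x * y) * z) /\
  (forall x : G, gone G * x = x) /\ (forall x : G, x * gone G = x) /\
  (forall x : G, ginv G x * x = gone G) /\ (forall x : G, x * ginv G x = gone G).

Definition topology_axioms : Prop :=
  gopen G (fun _ => True) /\
  (forall (I : Type) (F : I -> G -> Prop), (forall i, gopen G (F i)) ->
       gopen G (fun x => exists i, F i x)) /\
  (forall U V, gopen G U -> gopen G V -> gopen G (fun x => U x /\ V x)).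

Definition continuous_ops : Prop :=
  (forall (x y : G) (U : G -> Prop), gopen G U -> U (x * y) ->
     exists V W : G -> Prop, gopen G V /\ gopen G W /\ V x /\ W y /\
       (forall a b, V a -> W b -> U (a * b))) /\
  (forall (x : G) (U : G -> Prop), gopen G U -> U (ginv G x) ->
     exists V : G -> Prop, gopen G V /\ V x /\ (forall a, V a -> U (ginv G a))).

Definition hausdorff : Prop :=
  forall x y : G, x <> y -> exists U V : G -> Prop,
    gopen G U /\ gopen G V /\ U x /\ V y /\ (forall z, U z -> V z -> False).

Definition hausdorff_topological_group : Prop :=
  group_axioms /\ topology_axioms /\ continuous_ops /\ hausdorff.

Definition abelian : Prop := forall x y : G, x * y = y * x.

Definition converges_to (a : nat -> G) (x : G) : Prop :=
  forall U, gopen G U -> U x -> exists N, forall n, (N <= n)%nat -> U (a n).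

Definition convergent (a : nat -> G) : Prop := exists x, converges_to a x.

Fixpoint npow (g : G) (n : nat) : G :=
  match n with O => gone G | S k => g * npow g k end.

Definition zpow (g : G) (m : Z) : G :=
  match m with
  | Z0 => gone G
  | Zpos p => npow g (Pos.to_nat p)
  | Zneg p => ginv G (npow g (Pos.to_nat p))
  end.

(* partial products  f 0 * f 1 * ... * f n  (indexing from 0 instead of 1) *)
Fixpoint pprod (f : nat -> G) (n : nat) : G :=
  match n with O => f O | S k => pprod f k * f (S k) end.

Definition hyper_multipliable (g : nat -> G) : Prop :=
  forall m : nat -> Z, convergent (pprod (fun k => zpow (g k) (m k))).

Definition hyper_converging (g : nat -> G) : Prop :=
  forall m : nat -> Z, converges_to (fun n => zpow (g n) (m n)) (gone G).

Definition pairwise_distinct (g : nat -> G) : Prop :=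
  forall i j, i <> j -> g i <> g j.

Definition absolutely_productive (A : G -> Prop) : Prop :=
  forall g : nat -> G, pairwise_distinct g -> (forall n, A (g n)) ->
    hyper_multipliable g.

Definition finite_set (A : G -> Prop) : Prop :=
  exists l : list G, forall x, A x -> In x l.

Definition TAP : Prop :=
  forall A, absolutely_productive A -> finite_set A.

Definition HTAP : Prop :=
  forall g : nat -> G, pairwise_distinct g -> ~ hyper_multipliable g.

Definition STAP : Prop :=
  forall g : nat -> G, pairwise_distinct g -> ~ hyper_converging g.

Definition countable : Prop := exists f : G -> nat, forall x y, f x = f y -> x = y.

Definition metrizable : Prop :=
  exists d : G -> G -> R,
    (forall x y, (0 <= d x y)%R) /\ (forall x y, d x y = 0%R <-> x = y) /\
    (forall x y, d x y = d y x) /\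
    (forall x y z, (d x z <= d x y + d y z)%R) /\
    (forall U, gopen G U <->
       (forall x, U x -> exists eps, (0 < eps)%R /\
          forall y, (d x y < eps)%R -> U y)).

Definition precompact : Prop :=
  forall U, gopen G U -> U (gone G) ->
    exists l : list G, forall x, exists g, In g l /\ U (ginv G g * x).

End Props.

Record Group := {
  dcar :> Type;
  dmul : dcar -> dcar -> dcar;
  dinv : dcar -> dcar;
  done : dcar;
  dassoc : forall x y z, dmul x (dmul y z) = dmul (dmul x y) z;
  dmul1l : forall x, dmul done x = x;
  dmul1r : forall x, dmul x done = x;
  dmulVl : forall x, dmul (dinv x) x = done;
  dmulVr : forall x, dmul x (dinv x) = done
}.

Definition nontrivial (D : Group) : Prop := exists x : D, x <> done D.

Lemma dinv1 (D : Group) : dinv D (done D) = done D.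
Proof. rewrite <- (dmul1r D (dinv D (done D))). apply dmulVl. Qed.

Section RestrictedProduct.
Variable D : nat -> Group.

Definition fin_supp (g : forall i, D i) : Prop :=
  exists l : list nat, forall i, g i <> done (D i) -> In i l.

Definition Hcar := { g : forall i, D i | fin_supp g }.

Lemma fin_supp_mul (g h : forall i, D i) : fin_supp g -> fin_supp h ->
  fin_supp (fun i => dmul (D i) (g i) (h i)).
Proof.
  intros [l1 H1] [l2 H2]. exists (l1 ++ l2). intros i Hi. apply in_or_app.
  destruct (classic (g i = done (D i))) as [E1|E1]; [|left; auto].
  destruct (classic (h i = done (D i))) as [E2|E2]; [|right; auto].
  exfalso; apply Hi; rewrite E1, E2; apply dmul1l.
Qed.

Lemma fin_supp_inv (g : forall i, D i) : fin_supp g ->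
  fin_supp (fun i => dinv (D i) (g i)).
Proof.
  intros [l H1]. exists l. intros i Hi. apply H1. intro E; apply Hi.
  rewrite E; apply dinv1.
Qed.

Lemma fin_supp_one : fin_supp (fun i => done (D i)).
Proof. exists nil. intros i Hi; now destruct Hi. Qed.

(* topology induced on H by the product of the discrete topologies:
   U is open iff each x in U has a basic product neighbourhood
   {y | y i = x i for i in F}, F finite, whose trace on H lies in U. *)
Definition Hopen (U : Hcar -> Prop) : Prop :=
  forall x, U x -> exists F : list nat,
    forall y : Hcar, (forall i, In i F -> proj1_sig y i = proj1_sig x i) -> U y.

Definition restricted_product : GTData := {|
  gcar := Hcar;
  gmul := fun g h => exist _ _ (fin_supp_mul (proj2_sig g) (proj2_sig h));
  ginv := fun g => exist _ _ (fin_supp_inv (proj2_sig g));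
  gone := exist _ _ fin_supp_one;
  gopen := Hopen
|}.

End RestrictedProduct.

(* Main.v *)
Require Import Defs.
From Stdlib Require Import Reals ZArith List.
From Stdlib Require Import Arith Lia Lra Permutation Classical ClassicalEpsilon FunctionalExtensionality ProofIrrelevance.

Lemma build_seq {X : Type} (P : list X -> X -> Prop) :
  (forall L, exists x, P L x) -> exists g : nat -> X, forall k, P (map g (seq 0 k)) (g k).
Proof.
  intros H.
  assert (F : forall L, {x | P L x}) by (intro L; apply constructive_indefinite_description; auto).
  pose (f := fun L => proj1_sig (F L)).
  pose (hist := fix hist k := match k with O => nil | S k => hist k ++ f (hist k) :: nil end).
  exists (fun k => f (hist k)).
  assert (Hh : forall k, hist k = map (fun k => f (hist k)) (seq 0 k)).
  { induction k. reflexivity. rewrite seq_S, map_app. simpl. rewrite <- IHk. reflexivity. }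
  intro k. rewrite <- Hh. apply (proj2_sig (F _)).
Qed.

Lemma inj_not_in_list {X} (g : nat -> X) (l : list X) :
  (forall i j, i <> j -> g i <> g j) -> (forall n, In (g n) l) -> False.
Proof.
  intros Hd Hin.
  assert (ND : NoDup (map g (seq 0 (S (length l))))).
  { apply FinFun.Injective_map_NoDup. intros a b E. destruct (Nat.eq_dec a b); auto.
    exfalso; eapply Hd; eauto. apply seq_NoDup. }
  assert (Hle := NoDup_incl_length ND (l':=l)).
  rewrite length_map, length_seq in Hle.
  assert (S (length l) <= length l); [|lia].
  apply Hle. intros x Hx. apply in_map_iff in Hx. destruct Hx as [n [<- _]]. apply Hin.
Qed.

Lemma distinct_of_lt {X} (g : nat -> X) :
  (forall a b, a < b -> g a <> g b) -> forall i j, i <> j -> g i <> g j.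
Proof.
  intros H i j Hij E. destruct (Nat.lt_total i j) as [h|[h|h]].
  - exact (H i j h E). - contradiction. - exact (H j i h (eq_sym E)).
Qed.

Lemma hm_hc (G : GTData) : group_axioms G -> continuous_ops G ->
  forall g : nat -> G, hyper_multipliable G g -> hyper_converging G g.
Proof.
  intros [As [M1l [M1r [Vl Vr]]]] [Cm Ci] g Hm m.
  destruct (Hm m) as [x Hx].
  pose (f := fun k => zpow G (g k) (m k)). fold f in Hx.
  intros U HU Ue.
  assert (E: U (gmul G (ginv G x) x)) by now rewrite Vl.
  destruct (Cm _ _ _ HU E) as (V & W & HV & HW & Vx & Wx & HVW).
  destruct (Ci x V HV Vx) as (V' & HV' & V'x & HV'V).
  destruct (Hx V' HV' V'x) as [N1 HN1].
  destruct (Hx W HW Wx) as [N2 HN2].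
  exists (S (N1 + N2)). intros n Hn. destruct n as [|k]; [lia|].
  change (U (f (S k))).
  replace (f (S k)) with (gmul G (ginv G (pprod G f k)) (pprod G f (S k))).
  - apply HVW. apply HV'V, HN1; lia. apply HN2; lia.
  - simpl. rewrite As, Vl, M1l. reflexivity.
Qed.

Lemma partA1 G : hausdorff_topological_group G -> STAP G -> HTAP G.
Proof. intros (GA & TA & CO & HA) S g Hd Hm. apply (S g Hd). apply hm_hc; auto. Qed.

Lemma partA2 G : HTAP G -> TAP G.
Proof.
  intros H A Hab. apply NNPP. intro Hnf.
  assert (Ex : forall L : list G, exists x, A x /\ ~ In x L).
  { intro L. apply NNPP; intro C. apply Hnf. exists L. intros x Ax. apply NNPP. intro Hx. apply C. eauto. }
  destruct (build_seq (fun L x => A x /\ ~ In x L) Ex) as [g Hg].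
  assert (Hd : pairwise_distinct G g).
  { unfold pairwise_distinct; apply distinct_of_lt. intros a b Hab' E'. apply (proj2 (Hg b)). rewrite <- E'.
    apply in_map_iff. exists a. split; [reflexivity | apply in_seq; lia]. }
  apply (H g Hd). apply Hab; auto. intro n; apply (Hg n).
Qed.

Definition coord_ok (G : GTData) (D : nat -> Group) (c : forall i, G -> D i) : Prop :=
 (forall i x y, c i (gmul G x y) = dmul (D i) (c i x) (c i y)) /\
 (forall i, c i (gone G) = done (D i)) /\
 (forall i x, c i (ginv G x) = dinv (D i) (c i x)) /\
 (forall x, exists l, forall i, c i x <> done (D i) -> In i l) /\
 (forall x i, gopen G (fun y => c i y = c i x)) /\
 (forall x, (forall i, c i x = done (D i)) -> x = gone G) /\
 (forall U x, gopen G U -> U x -> exists F, forall y, (forall i, In i F -> c i y = c i x) -> U y).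

Lemma group_cancel (D : Group) (a b : D) : dmul D a b = a -> b = done D.
Proof.
  intro H. rewrite <- (dmul1l D b), <- (dmulVl D a), <- dassoc, H. reflexivity.
Qed.

Fixpoint dnpow (D : Group) (a : D) (k : nat) : D :=
  match k with O => done D | S k => dmul D a (dnpow D a k) end.

Lemma dnpow_one (D : Group) k : dnpow D (done D) k = done D.
Proof. induction k; simpl; auto. rewrite IHk. apply dmul1l. Qed.

Lemma list_max_in (F : list nat) i : In i F -> i <= list_max F.
Proof.
  intro Hi. assert (H := proj1 (list_max_le F (list_max F)) (le_n _)).
  rewrite Forall_forall in H. auto.
Qed.

Lemma coord_notSTAP (G : GTData) (D : nat -> Group) (c : forall i, G -> D i) (e : nat -> G) : coord_ok G D c ->
  (forall n i, i <> n -> c i (e n) = done (D i)) -> (forall n, c n (e n) <> done (D n)) -> ~ STAP G.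
Proof.
  intros (c_mul & c_one & c_inv & c_fin & c_open & c_inj & c_det) He1 He2 HS.
  assert (Cn : forall i g k, c i (npow G g k) = dnpow (D i) (c i g) k).
  { intros i g k. induction k; simpl. apply c_one. rewrite c_mul, IHk. reflexivity. }
  apply (HS e).
  - intros a b Hab E. apply (He2 a). rewrite E. apply He1. auto.
  - intros m U HU U1. destruct (c_det U (gone G) HU U1) as [F HF].
    exists (S (list_max F)). intros n Hn. apply HF. intros i Hi.
    assert (i <> n) by (apply list_max_in in Hi; lia).
    rewrite c_one. destruct (m n); simpl zpow; try rewrite c_inv; try rewrite Cn;
      try rewrite He1 by auto; try rewrite dnpow_one; try apply dinv1; auto.
Qed.

Definition dec (P : Prop) : bool := if excluded_middle_informative P then true else false.
Lemma dec_true P : dec P = true <-> P.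
Proof. unfold dec. destruct (excluded_middle_informative P); split; intros; auto; discriminate || contradiction. Qed.
Lemma dec_false P : dec P = false <-> ~ P.
Proof. unfold dec. destruct (excluded_middle_informative P); split; intros; auto; discriminate || contradiction. Qed.

Lemma coord_HTAP (G : GTData) (D : nat -> Group) (c : forall i, G -> D i) : coord_ok G D c -> HTAP G.
Proof.
  intros (c_mul & c_one & c_inv & c_fin & c_open & c_inj & c_det) g Hd Hm.
  assert (S1 : forall j, exists N, forall n, N <= n -> c j (g n) = done (D j)).
  { intro j. destruct (Hm (fun _ => 1%Z)) as [x Hx].
    destruct (Hx _ (c_open x j) eq_refl) as [N HN].
    exists (S N). intros n Hn. destruct n as [|k]; [lia|].
    assert (E1 := HN k ltac:(lia)). assert (E2 := HN (S k) ltac:(lia)).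
    simpl in E1, E2. rewrite c_mul, E1, c_mul, c_one, dmul1r in E2.
    eapply group_cancel; eauto. }
  assert (S1L : forall L, exists N, forall n, N <= n -> forall j, In j L -> c j (g n) = done (D j)).
  { induction L as [|j L IH]. exists 0; intros; contradiction.
    destruct IH as [N1 H1]. destruct (S1 j) as [N2 H2]. exists (N1 + N2).
    intros n Hn j' [<-|Hj']. apply H2; lia. apply H1; auto; lia. }
  assert (SP : forall x, {l | forall i, c i x <> done (D i) -> In i l}).
  { intro x. apply constructive_indefinite_description. apply c_fin. }
  pose (supp := fun x => proj1_sig (SP x)).
  assert (Hsupp : forall x i, c i x <> done (D i) -> In i (supp x)) by (intros; apply (proj2_sig (SP x)); auto).
  pose (P := fun (L : list (nat * nat)) (p : nat * nat) =>
     c (snd p) (g (fst p)) <> done (D (snd p)) /\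
     forall q, In q L -> forall j, c j (g (fst q)) <> done (D j) -> c j (g (fst p)) = done (D j)).
  assert (Ex : forall L, exists p, P L p).
  { intro L. destruct (S1L (flat_map (fun q => supp (g (fst q))) L)) as [N HN].
    assert (exists n, N <= n /\ g n <> gone G) as [n [Hn Hgn]].
    { destruct (classic (g N = gone G)) as [E|E].
      - exists (S N). split. lia. intro E'. apply (Hd N (S N)). lia. congruence.
      - exists N. auto. }
    assert (exists i, c i (g n) <> done (D i)) as [i Hi].
    { apply NNPP. intro C. apply Hgn. apply c_inj. intro i. apply NNPP. intro C'. apply C. eauto. }
    exists (n, i). split. exact Hi. intros q Hq j Hj. simpl. apply HN; auto.
    apply in_flat_map. exists q. split; auto. }
  destruct (build_seq P Ex) as [p Hp].
  pose (nn := fun k => fst (p k)). pose (ii := fun k => snd (p k)).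
  assert (A1 : forall k, c (ii k) (g (nn k)) <> done (D (ii k))) by (intro k; apply (Hp k)).
  assert (Hin : forall l k, l < k -> In (p l) (map p (seq 0 k))).
  { intros l k Hlk. apply in_map_iff. exists l. split; auto. apply in_seq. lia. }
  assert (A2 : forall l k, l < k -> forall j, c j (g (nn l)) <> done (D j) -> c j (g (nn k)) = done (D j)).
  { intros l k Hlk j Hj. apply (proj2 (Hp k) (p l)); auto. }
  assert (A3 : forall l k, l <> k -> c (ii k) (g (nn l)) = done (D (ii k))).
  { intros l k Hlk. destruct (Nat.lt_total l k) as [h|[h|h]]; [|contradiction|].
    - apply NNPP; intro C. apply (A1 k). apply (A2 l k h); auto.
    - apply (A2 k l h). apply A1. }
  assert (Ninj : forall l k, nn l = nn k -> l = k).
  { intros l k E. apply NNPP; intro C. apply (A1 k). rewrite <- E. apply A3; auto. }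
  assert (Iinj : forall l k, l <> k -> ii l <> ii k).
  { intros l k Hlk E. pose proof (A3 k l (not_eq_sym Hlk)) as h.
    rewrite E in h. exact (A1 k h). }
  pose (m := fun t => if dec (exists k, nn k = t) then 1%Z else 0%Z).
  pose (f := fun t => zpow G (g t) (m t)).
  assert (Cf : forall k t, c (ii k) (f t) =
     if Nat.eq_dec t (nn k) then c (ii k) (g (nn k)) else done (D (ii k))).
  { intros k t. unfold f, m. destruct (dec (exists k, nn k = t)) eqn:Ed.
    - apply (proj1 (dec_true _)) in Ed. destruct Ed as [l Hl]. simpl zpow. simpl npow.
      rewrite c_mul, c_one, dmul1r. destruct (Nat.eq_dec t (nn k)) as [E|E].
      + rewrite E. reflexivity.
      + subst t. apply A3. intro; subst; contradiction.
    - apply (proj1 (dec_false _)) in Ed. simpl zpow. rewrite c_one.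
      destruct (Nat.eq_dec t (nn k)) as [E|E]; [|reflexivity].
      exfalso; apply Ed; eauto. }
  assert (Cp : forall k N, c (ii k) (pprod G f N) =
     if le_dec (nn k) N then c (ii k) (g (nn k)) else done (D (ii k))).
  { intros k N. induction N as [|N IH]; simpl pprod.
    - rewrite Cf. destruct (Nat.eq_dec 0 (nn k)); destruct (le_dec (nn k) 0); auto; lia.
    - rewrite c_mul, IH, Cf. destruct (Nat.eq_dec (S N) (nn k)); destruct (le_dec (nn k) N);
        destruct (le_dec (nn k) (S N)); try lia;
        first [rewrite dmul1r; reflexivity | rewrite dmul1l; reflexivity]. }
  destruct (Hm m) as [x Hx]. fold f in Hx.
  assert (Cx : forall k, c (ii k) x <> done (D (ii k))).
  { intro k. destruct (Hx _ (c_open x (ii k)) eq_refl) as [N HN].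
    specialize (HN (N + nn k) ltac:(lia)). rewrite Cp in HN.
    destruct (le_dec (nn k) (N + nn k)); [|lia]. rewrite <- HN. apply A1. }
  apply (inj_not_in_list ii (supp x)). exact Iinj. intro k. apply Hsupp. apply Cx.
Qed.

Local Open Scope bool_scope.
Definition sel (G : GTData) (T : nat -> bool) (y : nat -> G) (n : nat) : G :=
  if T n then y n else gone G.

Definition prodL (G : GTData) (f : nat -> G) (l : list nat) : G :=
  fold_right (fun n acc => gmul G (f n) acc) (gone G) l.

Section GrpLemmas.
Context (G : GTData) (GA : group_axioms G).

Lemma pprod_ext (f f' : nat -> G) b : (forall n, n <= b -> f n = f' n) -> pprod G f b = pprod G f' b.
Proof. induction b; intro H; simpl; rewrite H by lia; try rewrite IHb; auto. Qed.

Lemma pprod_none (T : nat -> bool) y b : (forall n, n <= b -> T n = false) -> pprod G (sel G T y) b = gone G.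
Proof.
  destruct GA as [As [M1l _]].
  induction b; intro H; simpl; unfold sel at 2 || unfold sel; rewrite H by lia; try rewrite IHb; auto.
Qed.

Lemma pprod_split (T : nat -> bool) y a : forall b, a < b ->
  pprod G (sel G T y) b = gmul G (pprod G (sel G T y) a) (pprod G (sel G (fun n => T n && (a <? n)) y) b).
Proof.
  destruct GA as [As [M1l _]].
  induction b as [|b IH]; intro Hab; [lia|]. simpl pprod.
  assert (E : sel G (fun n => T n && (a <? n)) y (S b) = sel G T y (S b)).
  { unfold sel. replace (a <? S b) with true. rewrite Bool.andb_true_r; auto. symmetry; apply Nat.ltb_lt; lia. }
  rewrite E. destruct (Nat.eq_dec a b) as [<-|Hne].
  - rewrite (pprod_none (fun n => T n && (a <? n))). rewrite M1l. reflexivity.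
    intros n Hn. replace (a <? n) with false. apply Bool.andb_false_r. symmetry; apply Nat.ltb_ge; lia.
  - rewrite IH by lia. rewrite As. reflexivity.
Qed.

Lemma prodL_app f l1 l2 : prodL G f (l1 ++ l2) = gmul G (prodL G f l1) (prodL G f l2).
Proof.
  destruct GA as [As [M1l _]].
  induction l1; simpl. rewrite M1l; auto. rewrite IHl1, As. reflexivity.
Qed.

Lemma pprod_prodL f M : pprod G f M = prodL G f (seq 0 (S M)).
Proof.
  destruct GA as [As [M1l [M1r _]]].
  induction M. simpl. rewrite M1r; auto.
  rewrite seq_S, prodL_app, <- IHM. simpl. rewrite M1r. reflexivity.
Qed.

Lemma prodL_map f s l : prodL G f (map s l) = prodL G (fun k => f (s k)) l.
Proof. induction l; simpl; auto. rewrite IHl; auto. Qed.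

Lemma prodL_sel_filter (a : nat -> bool) y l : prodL G (sel G a y) l = prodL G y (filter a l).
Proof.
  destruct GA as [As [M1l _]].
  induction l; simpl; auto. unfold sel at 1. destruct (a a0); simpl; rewrite IHl; auto.
Qed.

Lemma ginv_one : ginv G (gone G) = gone G.
Proof. destruct GA as [As [M1l [M1r [Vl Vr]]]]. rewrite <- (M1r (ginv G (gone G))). apply Vl. Qed.

Context (Ab : abelian G).

Lemma prodL_perm f l l' : Permutation l l' -> prodL G f l = prodL G f l'.
Proof.
  destruct GA as [As _].
  induction 1; simpl; auto.
  - rewrite IHPermutation; auto.
  - rewrite !As, (Ab (f y)). reflexivity.
  - congruence.
Qed.

Lemma mul4 a b c d : gmul G (gmul G a b) (gmul G c d) = gmul G (gmul G a c) (gmul G b d).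
Proof.
  destruct GA as [As _].
  rewrite <- !As. f_equal. rewrite !As. f_equal. apply Ab.
Qed.

Lemma prodL_sel_split (a : nat -> bool) y l :
  prodL G y l = gmul G (prodL G (sel G a y) l) (prodL G (sel G (fun n => negb (a n)) y) l).
Proof.
  destruct GA as [As [M1l [M1r _]]].
  induction l; simpl. rewrite M1l; auto.
  rewrite mul4, <- IHl. f_equal. unfold sel. destruct (a a0); simpl; auto.
Qed.

End GrpLemmas.
Local Open Scope bool_scope.

Lemma cauchy (G : GTData) : group_axioms G -> continuous_ops G ->
  forall (Q : nat -> G), convergent G Q -> forall U, gopen G U -> U (gone G) ->
  exists M, forall a b, M <= a -> M <= b -> U (gmul G (ginv G (Q a)) (Q b)).
Proof.
  intros [As [M1l [M1r [Vl Vr]]]] [Cm Ci] Q [x Hx] U HU Ue.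
  assert (E: U (gmul G (ginv G x) x)) by now rewrite Vl.
  destruct (Cm _ _ _ HU E) as (V & W & HV & HW & Vx & Wx & HVW).
  destruct (Ci x V HV Vx) as (V' & HV' & V'x & HV'V).
  destruct (Hx V' HV' V'x) as [N1 HN1].
  destruct (Hx W HW Wx) as [N2 HN2].
  exists (N1 + N2). intros a b Ha Hb. apply HVW. apply HV'V, HN1; lia. apply HN2; lia.
Qed.

Lemma unif_cauchy (G : GTData) : group_axioms G -> continuous_ops G -> forall y : nat -> G,
  (forall T : nat -> bool, convergent G (pprod G (sel G T y))) ->
  forall U, gopen G U -> U (gone G) ->
  exists N, forall T : nat -> bool, (forall n, T n = true -> N <= n) -> forall b, U (pprod G (sel G T y) b).
Proof.
  intros GA CO y Hc U HU Ue.
  assert (GA' := GA). destruct GA' as [As [M1l [M1r [Vl Vr]]]].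
  apply NNPP. intro C.
  assert (C' : forall N, exists (T : nat -> bool) b, (forall n, T n = true -> N <= n) /\ ~ U (pprod G (sel G T y) b)).
  { intro N. apply NNPP. intro C2. apply C. exists N. intros T HT b. apply NNPP. intro C3. apply C2. eauto. }
  pose (P := fun (L : list (nat * (nat -> bool) * nat)) (q : nat * (nat -> bool) * nat) =>
    let '(N, T, b) := q in
    (forall r, In r L -> snd r < N) /\ (forall n, T n = true -> N <= n) /\ ~ U (pprod G (sel G T y) b)).
  assert (Ex : forall L, exists q, P L q).
  { intro L. destruct (C' (S (list_max (map snd L)))) as (T & b & H1 & H2).
    exists (S (list_max (map snd L)), T, b). simpl. split; [|split; auto].
    intros r Hr. assert (snd r <= list_max (map snd L)); [|lia].
    apply list_max_in. apply in_map; auto. }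
  destruct (build_seq P Ex) as [blk Hblk].
  pose (NN := fun j => fst (fst (blk j))). pose (TT := fun j => snd (fst (blk j))).
  pose (bb := fun j => snd (blk j)).
  assert (HB : forall j, (forall l, l < j -> bb l < NN j) /\ (forall n, TT j n = true -> NN j <= n)
     /\ ~ U (pprod G (sel G (TT j) y) (bb j))).
  { intro j. specialize (Hblk j). unfold P in Hblk. unfold NN, TT, bb.
    destruct (blk j) as [[N T] b] eqn:Eb. simpl. destruct Hblk as (H1 & H2 & H3).
    split; auto. intros l Hl. apply (H1 (blk l)). apply in_map_iff. exists l. split; auto. apply in_seq; lia. }
  assert (F2 : forall j, NN j <= bb j).
  { intro j. destruct (HB j) as (_ & H2 & H3). destruct (le_lt_dec (NN j) (bb j)); auto.
    exfalso. apply H3. rewrite pprod_none; auto. intros n Hn. destruct (TT j n) eqn:E; auto.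
    apply H2 in E. lia. }
  assert (F3 : forall j, j <= NN j).
  { induction j. lia. destruct (HB (S j)) as (H1 & _). specialize (H1 j ltac:(lia)). specialize (F2 j). lia. }
  pose (Tall := fun n => dec (exists j, TT j n = true /\ n <= bb j)).
  destruct (cauchy G GA CO _ (Hc Tall) U HU Ue) as [M HM].
  pose (j := S M). pose (a := pred (NN j)).
  assert (Ha : M <= a) by (pose proof (F3 j); unfold a, j in *; lia).
  assert (Hab : a < bb j) by (pose proof (F2 j); pose proof (F3 j); unfold a, j in *; lia).
  specialize (HM a (bb j) Ha ltac:(lia)).
  rewrite (pprod_split G GA Tall y a (bb j) Hab) in HM.
  rewrite As, Vl, M1l in HM.
  destruct (HB j) as (_ & H2 & H3). apply H3.
  erewrite pprod_ext; [exact HM|].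
  intros n Hn. unfold sel.
  assert (Eq : Tall n && (a <? n) = TT j n); [|cbv beta; rewrite Eq; reflexivity].
  destruct (TT j n) eqn:E.
  - assert (Tall n = true). { apply dec_true. exists j. auto. }
    rewrite H. simpl. apply Nat.ltb_lt. apply H2 in E. pose proof (F3 j). unfold a, j in *; lia.
  - destruct (Tall n) eqn:E2; [|reflexivity]. simpl.
    apply (proj1 (dec_true _)) in E2. destruct E2 as [l [El Hl]].
    apply Nat.ltb_ge. destruct (Nat.lt_total l j) as [h|[h|h]].
    + destruct (HB j) as (H1 & _ & _). specialize (H1 l h). unfold a. lia.
    + subst l. congruence.
    + destruct (HB l) as (H1 & H2' & _). specialize (H1 j h). apply H2' in El. lia.
Qed.

Lemma inj_escape (s : nat -> nat) : (forall a b, s a = s b -> a = b) ->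
  forall N, exists K0, forall k, K0 <= k -> N <= s k.
Proof.
  intros Hs N. induction N. exists 0; intros; lia.
  destruct IHN as [K0 HK].
  destruct (classic (exists k, s k = N)) as [[kN HkN]|Hno].
  - exists (max K0 (S kN)). intros k Hk. specialize (HK k ltac:(lia)).
    destruct (Nat.eq_dec (s k) N) as [e|e]. rewrite <- HkN in e; apply Hs in e; lia. lia.
  - exists K0. intros k Hk. specialize (HK k Hk). destruct (Nat.eq_dec (s k) N). exfalso; eauto. lia.
Qed.

Lemma TAP_HTAP (G : GTData) : hausdorff_topological_group G -> abelian G -> TAP G -> HTAP G.
Proof.
  intros (GA & TA & CO & Hhaus) Ab Ht g Hd Hm.
  assert (GA' := GA). destruct GA' as [As [M1l [M1r [Vl Vr]]]].
  assert (CO' := CO). destruct CO' as [Cm Ci].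
  pose (A := fun x => exists n, g n = x).
  assert (Hab : absolutely_productive G A).
  { intros h Hdh HA m.
    assert (Sg : forall k, {n | g n = h k}) by (intro k; apply constructive_indefinite_description; apply HA).
    pose (s := fun k => proj1_sig (Sg k)).
    assert (Hs : forall k, g (s k) = h k) by (intro k; apply (proj2_sig (Sg k))).
    assert (sinj : forall a b, s a = s b -> a = b).
    { intros a b E. apply NNPP. intro C. apply (Hdh a b C). rewrite <- !Hs, E. reflexivity. }
    pose (m' := fun n => match excluded_middle_informative (exists k, s k = n) with
       | left E => m (proj1_sig (constructive_indefinite_description _ E)) | right _ => 0%Z end).
    assert (Hm' : forall k, m' (s k) = m k).
    { intro k. unfold m'. destruct (excluded_middle_informative _) as [E|E].
      - destruct (constructive_indefinite_description _ E) as [k' Hk']. simpl. apply sinj in Hk'. subst; auto.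
      - exfalso; eauto. }
    pose (y := fun n => zpow G (g n) (m' n)).
    assert (Hy0 : forall n, ~ (exists k, s k = n) -> y n = gone G).
    { intros n Hn. unfold y, m'. destruct (excluded_middle_informative _); [contradiction|reflexivity]. }
    assert (HyT : forall T : nat -> bool, convergent G (pprod G (sel G T y))).
    { intro T. replace (sel G T y) with (fun n => zpow G (g n) (if T n then m' n else 0%Z)).
      apply Hm. apply functional_extensionality. intro n. unfold sel, y. destruct (T n); reflexivity. }
    destruct (Hm m') as [x Hx]. fold y in Hx.
    exists x. intros U HU Ux.
    assert (Ux' : U (gmul G x (ginv G (gone G)))) by (rewrite ginv_one, M1r; auto).
    destruct (Cm _ _ _ HU Ux') as (V & W & HV & HW & Vx & Wx & HVW).
    destruct (Ci _ W HW Wx) as (W' & HW' & W'1 & HW'W).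
    destruct (unif_cauchy G GA CO y HyT W' HW' W'1) as [N HN].
    destruct (inj_escape s sinj N) as [K0 HK0].
    destruct (Hx V HV Vx) as [N1 HN1].
    exists K0. intros K HK.
    pose (L := map s (seq 0 (S K))).
    pose (M := N1 + list_max L).
    pose (a := fun n => dec (In n L)).
    pose (TK := fun n => dec (exists k, s k = n) && negb (a n)).
    assert (Key : pprod G y M = gmul G (pprod G (fun k => zpow G (h k) (m k)) K) (pprod G (sel G TK y) M)).
    { rewrite !(pprod_prodL G GA). rewrite (prodL_sel_split G GA Ab a y). f_equal.
      - rewrite prodL_sel_filter by exact GA.
        assert (Pm : Permutation (filter a (seq 0 (S M))) L).
        { apply NoDup_Permutation. apply NoDup_filter, seq_NoDup.
          apply FinFun.Injective_map_NoDup. intros u v; apply sinj. apply seq_NoDup.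
          intro z. rewrite filter_In. split.
          - intros [_ Hz]. apply (proj1 (dec_true _)) in Hz. exact Hz.
          - intro Hz. split. apply in_seq. pose proof (list_max_in L z Hz). unfold M; lia.
            apply dec_true; exact Hz. }
        rewrite (prodL_perm G GA Ab _ _ _ Pm). unfold L. rewrite prodL_map.
        f_equal. apply functional_extensionality. intro k. unfold y. rewrite Hs, Hm'. reflexivity.
      - f_equal. apply functional_extensionality. intro n. unfold sel, TK.
        destruct (a n); simpl. rewrite Bool.andb_false_r. reflexivity.
        rewrite Bool.andb_true_r. destruct (dec (exists k, s k = n)) eqn:E; auto.
        apply Hy0. apply (proj1 (dec_false _)). exact E. }
    replace (pprod G (fun k => zpow G (h k) (m k)) K) with (gmul G (pprod G y M) (ginv G (pprod G (sel G TK y) M))).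
    - apply HVW. apply HN1. unfold M; lia. apply HW'W. apply HN; auto.
      intros n Hn. unfold TK in Hn. apply andb_prop in Hn. destruct Hn as [H1 H2].
      apply (proj1 (dec_true _)) in H1. destruct H1 as [k Hk]. subst n.
      apply HK0. destruct (le_lt_dec k K) as [h'|h']; [|lia]. exfalso.
      assert (a (s k) = true). { apply dec_true. apply in_map_iff. exists k. split; auto. apply in_seq. lia. }
      rewrite H in H2. discriminate.
    - rewrite Key, <- As, Vr, M1r. reflexivity. }
  destruct (Ht A Hab) as [l Hl].
  apply (inj_not_in_list g l); [exact Hd | intro n; apply Hl; exists n; auto].
Qed.

Lemma rp_coord (D : nat -> Group) :
  coord_ok (restricted_product D) D (fun i x => proj1_sig x i).
Proof.
  split; [intros; reflexivity|]. split; [intros; reflexivity|]. split; [intros; reflexivity|].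
  split; [intro x; exact (proj2_sig x)|].
  split.
  { intros x i z Hz. exists (i :: nil). intros y Hy. rewrite Hy by (left; auto). exact Hz. }
  split.
  { intros [f pf] H. simpl in H.
    assert (E : f = fun i => done (D i)) by (apply functional_extensionality_dep; exact H).
    subst f. unfold gone; simpl. f_equal. apply proof_irrelevance. }
  intros U x HU Ux. exact (HU x Ux).
Qed.

Lemma partB (D : nat -> Group) : (forall i, nontrivial (D i)) ->
  HTAP (restricted_product D) /\ ~ STAP (restricted_product D).
Proof.
  intro HD. split. apply (coord_HTAP _ _ _ (rp_coord D)).
  assert (Ha : forall i, {x : D i | x <> done (D i)}) by (intro i; apply constructive_indefinite_description; apply HD).
  pose (a := fun i => proj1_sig (Ha i)).
  pose (ef := fun n i => match Nat.eq_dec n i with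
                          | left E => eq_rect n (fun j => dcar (D j)) (a n) i E
                          | right _ => done (D i) end).
  assert (efs : forall n, fin_supp D (ef n)).
  { intro n. exists (n :: nil). intros i Hi. unfold ef in Hi. destruct (Nat.eq_dec n i). left; auto. contradiction. }
  apply (coord_notSTAP _ _ _ (fun n => exist _ (ef n) (efs n) : restricted_product D) (rp_coord D)).
  - intros n i Hin. simpl. unfold ef. destruct (Nat.eq_dec n i). congruence. reflexivity.
  - intro n. simpl. unfold ef. destruct (Nat.eq_dec n n) as [E|E]; [|contradiction].
    rewrite (proof_irrelevance _ E eq_refl). simpl. exact (proj2_sig (Ha n)).
Qed.

Definition boolGroup : Group.
Proof.
  refine {| dcar := bool; dmul := xorb; dinv := fun b => b; done := false |};
  intros; repeat match goal with b : bool |- _ => destruct b end; reflexivity.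
Defined.

Definition agree (k x y : nat) : Prop := forall i, i < k -> Nat.testbit y i = Nat.testbit x i.

Definition xopen (U : nat -> Prop) : Prop :=
  forall x, U x -> exists k, forall y, agree k x y -> U y.

Definition XG : GTData := {| gcar := nat; gmul := Nat.lxor; ginv := fun x => x; gone := 0; gopen := xopen |}.

Lemma xg_coord : coord_ok XG (fun _ => boolGroup) (fun i x => Nat.testbit x i).
Proof.
  split; [intros; apply Nat.lxor_spec|]. split; [intros; apply Nat.bits_0|].
  split; [intros; reflexivity|].
  split.
  { intro x. exists (seq 0 (S (Nat.log2 x))). intros i Hi. apply in_seq.
    destruct (le_lt_dec i (Nat.log2 x)). lia. exfalso; apply Hi. apply Nat.bits_above_log2; auto. }
  split.
  { intros x i z Hz. exists (S i). intros y Hy. simpl. rewrite Hy by lia. exact Hz. }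
  split.
  { intros x H. apply Nat.bits_inj_0. exact H. }
  intros U x HU Ux. destruct (HU x Ux) as [k Hk]. exists (seq 0 k). intros y Hy. apply Hk.
  intros i Hi. apply Hy. apply in_seq. lia.
Qed.

Lemma least_ex (P : nat -> Prop) : (exists n, P n) -> exists n, P n /\ forall m, m < n -> ~ P m.
Proof.
  intros [n Hn]. revert Hn. induction n as [n IH] using (well_founded_induction lt_wf). intro Hn.
  destruct (classic (exists m, m < n /\ P m)) as [[m [Hm Pm]]|Hno].
  - exact (IH m Hm Pm).
  - exists n. split; auto. intros m Hm Pm; apply Hno; eauto.
Qed.

Definition ld (x y : nat) : nat :=
  match excluded_middle_informative (exists n, Nat.testbit x n <> Nat.testbit y n /\
      forall m, m < n -> Nat.testbit x m = Nat.testbit y m) with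
  | left H => proj1_sig (constructive_indefinite_description _ H)
  | right _ => 0 end.

Lemma bit_eq (b c : bool) : ~ b <> c -> b = c.
Proof. destruct b, c; auto; intro H; exfalso; apply H; discriminate. Qed.

Lemma ld_spec x y : x <> y -> Nat.testbit x (ld x y) <> Nat.testbit y (ld x y) /\
   forall m, m < ld x y -> Nat.testbit x m = Nat.testbit y m.
Proof.
  intro Hxy. unfold ld. destruct (excluded_middle_informative _) as [H|H].
  - destruct (constructive_indefinite_description _ H) as [k Hk]. exact Hk.
  - exfalso. apply H.
    assert (exists n, Nat.testbit x n <> Nat.testbit y n) as Ex.
    { apply NNPP. intro C. apply Hxy. apply Nat.bits_inj. intro n. apply bit_eq. intro C'. apply C; eauto. }
    destruct (least_ex _ Ex) as [n [Hn Hm]]. exists n. split; auto. intros m Hmn. apply bit_eq. apply Hm; auto.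
Qed.

Lemma ld_unique x y k : Nat.testbit x k <> Nat.testbit y k ->
  (forall m, m < k -> Nat.testbit x m = Nat.testbit y m) -> ld x y = k.
Proof.
  intros H1 H2. assert (x <> y) by (intro; subst; auto).
  destruct (ld_spec x y H) as [H3 H4].
  destruct (Nat.lt_total (ld x y) k) as [h|[h|h]]; auto.
  - exfalso; apply H3, H2, h.
  - exfalso; apply H1, H4, h.
Qed.

Lemma ld_sym x y : x <> y -> ld x y = ld y x.
Proof.
  intro H. destruct (ld_spec y x (not_eq_sym H)) as [H1 H2].
  apply ld_unique. intro E; apply H1; auto. intros m Hm. symmetry; auto.
Qed.

Definition xdist (x y : nat) : R := if Nat.eq_dec x y then 0%R else (/ INR (S (ld x y)))%R.

Lemma inv_S_pos k : (0 < / INR (S k))%R.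
Proof. apply Rinv_0_lt_compat, lt_0_INR; lia. Qed.

Lemma inv_S_le a b : a <= b -> (/ INR (S b) <= / INR (S a))%R.
Proof. intro H. apply Rinv_le_contravar. apply lt_0_INR; lia. apply le_INR; lia. Qed.

Lemma ld_min x y z : x <> y -> y <> z -> x <> z -> Nat.min (ld x y) (ld y z) <= ld x z.
Proof.
  intros H1 H2 H3. destruct (ld_spec x y H1) as [_ A1]. destruct (ld_spec y z H2) as [_ A2].
  destruct (ld_spec x z H3) as [B _].
  destruct (le_lt_dec (Nat.min (ld x y) (ld y z)) (ld x z)) as [h|h]; auto.
  exfalso. apply B. rewrite A1, A2; auto; lia.
Qed.

Lemma xg_metrizable : metrizable XG.
Proof.
  exists xdist. split; [|split; [|split; [|split]]].
  - intros x y. unfold xdist. destruct (Nat.eq_dec x y). lra. left; apply inv_S_pos.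
  - intros x y. unfold xdist. destruct (Nat.eq_dec x y). tauto. split; [|intro; contradiction].
    intro E. pose proof (inv_S_pos (ld x y)). simpl in *. lra.
  - intros x y. unfold xdist. destruct (Nat.eq_dec x y); destruct (Nat.eq_dec y x); subst; try congruence.
    rewrite ld_sym; auto.
  - intros x y z. unfold xdist.
    destruct (Nat.eq_dec x z) as [e1|e1]; destruct (Nat.eq_dec x y) as [e2|e2];
      destruct (Nat.eq_dec y z) as [e3|e3]; subst; try congruence;
      try (pose proof (inv_S_pos (ld y z)); lra);
      try (pose proof (inv_S_pos (ld x y)); pose proof (inv_S_pos (ld y z)); lra);
      try lra.
    1: (pose proof (inv_S_pos (ld z y)); pose proof (inv_S_pos (ld y z)); lra).
    pose proof (ld_min x y z e2 e3 e1).
    pose proof (inv_S_pos (ld x y)). pose proof (inv_S_pos (ld y z)).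
    destruct (le_dec (ld x y) (ld y z)).
    + rewrite Nat.min_l in H by auto. pose proof (inv_S_le _ _ H). lra.
    + rewrite Nat.min_r in H by lia. pose proof (inv_S_le _ _ H). lra.
  - intro U. simpl. split.
    + intros HU x Ux. destruct (HU x Ux) as [k Hk]. exists (/ INR (S k))%R. split. apply inv_S_pos.
      intros y Hy. apply Hk. intros i Hi. unfold xdist in Hy. destruct (Nat.eq_dec x y) as [e|e].
      * subst; reflexivity.
      * assert (k <= ld x y).
        { destruct (le_lt_dec k (ld x y)); auto. pose proof (inv_S_le (ld x y) k ltac:(lia)). lra. }
        symmetry. apply (ld_spec x y e). lia.
    + intros H x Ux. destruct (H x Ux) as [eps [He Hy]]. destruct (archimed_cor1 eps He) as [N [HN HN0]].
      exists N. intros y Hag. apply Hy. unfold xdist. destruct (Nat.eq_dec x y) as [e|e]. lra.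
      assert (N <= ld x y).
      { destruct (le_lt_dec N (ld x y)); auto. exfalso. destruct (ld_spec x y e) as [B _]. apply B.
        symmetry. apply Hag. auto. }
      assert (/ INR (S (ld x y)) <= / INR N)%R. { apply Rinv_le_contravar. apply lt_0_INR; auto. apply le_INR; lia. }
      lra.
Qed.

Lemma agree_open k x : xopen (fun y => agree k x y).
Proof.
  intros z Hz. exists k. intros y Hy i Hi. rewrite Hy by auto. apply Hz; auto.
Qed.

Lemma xg_htg : hausdorff_topological_group XG.
Proof.
  split; [|split; [|split]].
  - split; [|split; [|split; [|split]]]; simpl; intros.
    symmetry; apply Nat.lxor_assoc. apply Nat.lxor_0_l. apply Nat.lxor_0_r.
    apply Nat.lxor_nilpotent. apply Nat.lxor_nilpotent.
  - split; [|split]; simpl.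
    + intros x _. exists 0. auto.
    + intros I F HF x [i Fi]. destruct (HF i x Fi) as [k Hk]. exists k. intros y Hy. exists i. auto.
    + intros U V HU HV x [Ux Vx]. destruct (HU x Ux) as [k1 H1]. destruct (HV x Vx) as [k2 H2].
      exists (k1 + k2). intros y Hy. split; [apply H1|apply H2]; intros i Hi; apply Hy; lia.
  - split; simpl.
    + intros x y U HU Uxy. destruct (HU _ Uxy) as [k Hk].
      exists (agree k x), (agree k y). split. apply agree_open. split. apply agree_open.
      split. intros i _; auto. split. intros i _; auto.
      intros a b Ha Hb. apply Hk. intros i Hi. rewrite !Nat.lxor_spec, Ha, Hb; auto.
    + intros x U HU Ux. exists U. auto.
  - intros x y Hxy. simpl. destruct (ld_spec x y Hxy) as [B _].
    exists (agree (S (ld x y)) x), (agree (S (ld x y)) y).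
    split. apply agree_open. split. apply agree_open. split. intros i _; auto. split. intros i _; auto.
    intros z Hx Hy. apply B. rewrite <- (Hx (ld x y)), <- (Hy (ld x y)); auto.
Qed.

Lemma xg_precompact : precompact XG.
Proof.
  intros U HU U0. simpl in *. destruct (HU 0 U0) as [k Hk].
  exists (seq 0 (2 ^ k)). intro x. exists (x mod 2 ^ k). split.
  - apply in_seq. split. lia. simpl. apply Nat.mod_upper_bound. apply Nat.pow_nonzero. lia.
  - apply Hk. intros i Hi. rewrite Nat.lxor_spec, Nat.mod_pow2_bits_low, Nat.bits_0 by auto.
    destruct (Nat.testbit x i); reflexivity.
Qed.

Lemma xg_notSTAP : ~ STAP XG.
Proof.
  apply (coord_notSTAP XG (fun _ => boolGroup) (fun i x => Nat.testbit x i) (fun n => 2 ^ n) xg_coord).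
  - intros n i H. simpl. rewrite Nat.pow2_bits_eqb. apply Nat.eqb_neq. auto.
  - intro n. simpl. rewrite Nat.pow2_bits_eqb, Nat.eqb_refl. discriminate.
Qed.

Theorem lemma4p4 :
  (forall G : GTData, hausdorff_topological_group G ->
     (STAP G -> HTAP G) /\ (HTAP G -> TAP G)) /\
  (forall G : GTData, hausdorff_topological_group G -> abelian G ->
     (HTAP G <-> TAP G)) /\
  (forall D : nat -> Group, (forall i, nontrivial (D i)) ->
     HTAP (restricted_product D) /\ ~ STAP (restricted_product D)) /\
  (exists G : GTData, hausdorff_topological_group G /\ abelian G /\
     countable G /\ metrizable G /\ precompact G /\ TAP G /\ ~ STAP G).
Proof.
  split; [|split; [|split]].
  - intros G HG. split. apply partA1; auto. apply partA2.
  - intros G HG Ab. split. apply partA2. apply TAP_HTAP; auto.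
  - exact partB.
  - exists XG. split. exact xg_htg. split. intros x y; apply Nat.lxor_comm.
    split. exists (fun x => x). auto. split. exact xg_metrizable. split. exact xg_precompact.
    split. apply partA2. apply (coord_HTAP _ _ _ xg_coord). exact xg_notSTAP.
Qed.
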